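(* Consider the discrete-time system $$x(t+1)=A\,Z(x(t))+B\,u(t)+w(t),\qquad Z(x)=\begin{bmatrix}x\\ S(x)\end{bmatrix}\in\mathbb{R}^{n+N},$$ with unknown $A=[A_1\ \ A_2]$ ($A_1\in\mathbb{R}^{n\times n}$, $A_2\in\mathbb{R}^{n\times N}$), unknown $B\in\mathbb{R}^{n\times m}$, known differentiable $S:\mathbb{R}^n\to\mathbb{R}^N$ with $S(0)=0$, and disturbances satisfying $\|w(t)\|\le h_w$ for all $t$. Let $A_s=\frac{\partial S}{\partial x}(0)$, $Q(x)=S(x)-A_sx$, $\bar A_1=A_1+A_2A_s$; assume $(\bar A_1,B)$ is stabilizable and $Q$ is Lipschitz on the safe set $\mathcal{S}(F,g)=\{x: Fx\le g\}$ ($F\in\mathbb{R}^{s\times n}$, $g\in\mathbb{R}^s$), which is a polyhedral C-set. Let data $U_0,X_0,X_1,V_0$ be collected from this system (under unknown disturbances $W_0$), with $V_0$ of full row rank and $T\ge n+N+1$. Let $\lambda\in(0,1]$ and $\mathcal{W}_W=\{W\in\mathbb{R}^{n\times T}:\|W\|\le Th_w\}$. For $x\in\mathbb{R}^n$, $W\in\mathbb{R}^{n\times T}$, $w\in\mathbb{R}^n$ and $G_K=[G_{K,1}\ G_{K,2}]$ define $$\delta=X_1G_{K,2}Q(x)-W\big(G_{K,1}x+G_{K,2}Q(x)\big)+w.$$ Suppose there exist $G_K\in\mathbb{R}^{T\times(n+N)}$ and $P_s\in\mathbb{R}^{s\times s}$ such that $$P_sg\le\lambda g-l^{dw},\qquad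 P_sF=FX_1G_{K,1},\qquad V_0G_K=I,\qquad P_s\ge0,$$ where $l^{dw}=[l^{dw}_1,\dots,l^{dw}_s]^T$ with $$l^{dw}_i=\min_{G_{K,2}}\ \max_{x:\,Fx\le g}\ \max_{W\in\mathcal{W}_W}\ \max_{\|w\|\le h_w}\ F_i\,\delta,\quad i=1,\dots,s,$$ and the matrix $G_{K,2}$ in $G_K$ attains each of these minima. Then, with $K_1=U_0G_{K,1}$ and $K_2=U_0G_{K,2}$, the safe set $\mathcal{S}(F,g)$ is $\lambda$-contractive (and hence robustly invariant) for the closed-loop system under the controller $u(t)=K_1x(t)+K_2Q(x(t))$.
   Context: $\|\cdot\|$ is the infinity norm for vectors and the induced infinity norm (maximum absolute row sum) for matrices. Data: inputs $u(0),\dots,u(T-1)$ applied, states $x(0),\dots,x(T)$ recorded, unmeasured disturbances $w(0),\dots,w(T-1)$; $U_0=[u(0)\cdots u(T-1)]$, $X_0=[x(0)\cdots x(T-1)]$, $X_1=[x(1)\cdots x(T)]$, $W_0=[w(0)\cdots w(T-1)]$, $V_0=\begin{bmatrix}X_0\\ Q(X_0)\end{bmatrix}$ with $Q(X_0)=[Q(x(0))\cdots Q(x(T-1))]$; $G_{K,1}\in\mathbb{R}^{T\times n}$, $G_{K,2}\in\mathbb{R}^{T\times N}$. $F_i$ is the $i$-th row of $F$. Inequalities are elementwise; $P_s\ge0$ means entrywise nonnegative. A polyhedral C-set is a compact convex polyhedron containing the origin in its interior. The set $\mathcal{P}=\{x:Fx\le g\}$ is $\lambda$-contractive if $x(t)\in\mathcal{P}$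 implies $x(t+1)\in\{x:Fx\le\lambda g\}$ for all $t$ and all disturbances with $\|w(t)\|\le h_w$; robustly invariant if $x(0)\in\mathcal{P}$ implies $x(t)\in\mathcal{P}$ for all $t\ge0$ and all such disturbances. *)

(* Defs.v *)
From HB Require Import structures.
From mathcomp Require Import all_boot all_order all_algebra.
From mathcomp Require Import all_classical all_reals all_analysis.
Set Implicit Arguments. Unset Strict Implicit. Unset Printing Implicit Defensive.
Import Order.TTheory GRing.Theory Num.Theory.
Import numFieldNormedType.Exports.
Local Open Scope classical_set_scope.
Local Open Scope ring_scope.

Section Defs.
Variable R : realType.

Definition mxle (p q : nat) (M1 M2 : 'M[R]_(p, q)) : Prop :=
  forall i j, M1 i j <= M2 i j.

Definition vnorm (k : nat) (v : 'cV[R]_k) : R := \big[Num.max/0]_(i < k) `|v i ord0|.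

Definition mnorm (p q : nat) (M : 'M[R]_(p, q)) : R :=
  \big[Num.max/0]_(i < p) \sum_(j < q) `|M i j|.

Definition safe_set (n s : nat) (F : 'M[R]_(s, n)) (g : 'cV[R]_s) : set 'cV[R]_n :=
  [set x | mxle (F *m x) g].

(* polyhedral C-set: compact convex polyhedron containing the origin in its
   interior ({x | F x <= g} is always a convex polyhedron) *)
Definition polyhedral_Cset (n s : nat) (F : 'M[R]_(s, n)) (g : 'cV[R]_s) : Prop :=
  compact (safe_set F g) /\ nbhs (0 : 'cV[R]_n) (safe_set F g).

Definition lipschitz_onS (n k : nat) (f : 'cV[R]_n -> 'cV[R]_k) (D : set 'cV[R]_n) : Prop :=
  exists L : R, forall x y, D x -> D y -> vnorm (f x - f y) <= L * vnorm (x - y).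

Definition stabilizable (n m : nat) (A : 'M[R]_n) (B : 'M[R]_(n, m)) : Prop :=
  exists K : 'M[R]_(m, n), (fun k : nat => (A + B *m K) ^+ k) @ \oo --> (0 : 'M[R]_n).

Definition datamx (k T : nat) (v : nat -> 'cV[R]_k) : 'M[R]_(k, T) :=
  \matrix_(i < k, j < T) v j i ord0.

Definition is_max (A : set R) (r : R) : Prop := A r /\ forall y, A y -> y <= r.
Definition is_min (A : set R) (r : R) : Prop := A r /\ forall y, A y -> r <= y.

Definition delta_term (n N T : nat) (X1 : 'M[R]_(n, T)) (G1 : 'M[R]_(T, n))
  (G2 : 'M[R]_(T, N)) (Q : 'cV[R]_n -> 'cV[R]_N) (x : 'cV[R]_n)
  (W : 'M[R]_(n, T)) (w : 'cV[R]_n) : 'cV[R]_n :=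
  X1 *m G2 *m Q x - W *m (G1 *m x + G2 *m Q x) + w.

Definition worst_vals (n N s T : nat) (F : 'M[R]_(s, n)) (g : 'cV[R]_s) (hw : R)
  (X1 : 'M[R]_(n, T)) (G1 : 'M[R]_(T, n)) (G2 : 'M[R]_(T, N))
  (Q : 'cV[R]_n -> 'cV[R]_N) (i : 'I_s) : set R :=
  [set r | exists x W w, safe_set F g x /\ mnorm W <= T%:R * hw /\ vnorm w <= hw /\
      r = (row i F *m delta_term X1 G1 G2 Q x W w) ord0 ord0].

Definition lam_contractive (n s : nat) (f : 'cV[R]_n -> 'cV[R]_n -> 'cV[R]_n)
  (F : 'M[R]_(s, n)) (g : 'cV[R]_s) (lam hw : R) : Prop :=
  forall x w, safe_set F g x -> vnorm w <= hw -> mxle (F *m f x w) (lam *: g).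

Definition robust_invariant (n s : nat) (f : 'cV[R]_n -> 'cV[R]_n -> 'cV[R]_n)
  (F : 'M[R]_(s, n)) (g : 'cV[R]_s) (hw : R) : Prop :=
  forall (xs ws : nat -> 'cV[R]_n),
    safe_set F g (xs 0%N) -> (forall t, vnorm (ws t) <= hw) ->
    (forall t, xs t.+1 = f (xs t) (ws t)) -> forall t, safe_set F g (xs t).

End Defs.

(* Main.v *)
Require Import Defs.
From HB Require Import structures.
From mathcomp Require Import all_boot all_order all_algebra.
From mathcomp Require Import all_classical all_reals all_analysis.
Import Order.TTheory GRing.Theory Num.Theory.
Import numFieldNormedType.Exports.
Local Open Scope classical_set_scope.
Local Open Scope ring_scope.

Lemma zmod_id (V : zmodType) (a b c d e p q w : V) :
  a + (b + c) + (d + e) + w = a + c + d + p + (b + e + q - (p + q) + w).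
Proof.
have -> : b + e + q - (p + q) = b + e - p by rewrite opprD addrA (addrAC _ q) addrK.
rewrite (addrC (b + e)) !addrA addrK.
by rewrite -(addrA a b c) (addrC b c) addrA -(addrA (a+c) b d) (addrC b d) addrA.
Qed.

Lemma mx_colP (R : realType) p q (M1 M2 : 'M[R]_(p,q)) :
  (forall j, col j M1 = col j M2) -> M1 = M2.
Proof.
move=> H; apply/matrixP=> i j.
by move: (congr1 (fun M : 'M[R]_(p,1) => M i ord0) (H j)); rewrite !mxE.
Qed.

Lemma datamx_col (R : realType) k T (v : nat -> 'cV[R]_k) (j : 'I_T) :
  col j (datamx T v) = v j.
Proof. by apply/matrixP=> i l; rewrite !mxE (ord1 l). Qed.

Lemma vnorm_ge0 (R : realType) k (v : 'cV[R]_k) : 0 <= vnorm v.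
Proof.
rewrite /vnorm; elim/big_ind: _ => //.
  by move=> x y hx hy; rewrite le_max hx.
Qed.

Lemma vnorm_ge (R : realType) k (v : 'cV[R]_k) i : `|v i ord0| <= vnorm v.
Proof.
rewrite /vnorm (bigD1 i) //=. by rewrite le_max lexx.
Qed.
Arguments vnorm_ge0 {R k}.
Arguments vnorm_ge {R k}.
Arguments mx_colP {R p q}.

Theorem corollary1 (R : realType) (n m N s T : nat)
  (A : 'M[R]_(n, n + N)) (B : 'M[R]_(n, m))
  (S : 'cV[R]_n -> 'cV[R]_N) (As : 'M[R]_(N, n))
  (F : 'M[R]_(s, n)) (g : 'cV[R]_s) (hw lam : R)
  (ud : nat -> 'cV[R]_m) (xd wd : nat -> 'cV[R]_n) :
  (forall x, differentiable S x) ->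
  S 0 = 0 ->
  (forall v, 'd S 0 v = As *m v) ->
  stabilizable (lsubmx A + rsubmx A *m As) B ->
  lipschitz_onS (fun x => S x - As *m x) (safe_set F g) ->
  polyhedral_Cset F g ->
  (forall t : nat, (t < T)%N ->
     xd t.+1 = A *m col_mx (xd t) (S (xd t)) + B *m ud t + wd t) ->
  (forall t : nat, vnorm (wd t) <= hw) ->
  let Q := fun x => S x - As *m x in
  let U0 := datamx T ud in
  let X0 := datamx T xd in
  let X1 := datamx T (fun t => xd t.+1) in
  let V0 := col_mx X0 (datamx T (fun t => Q (xd t))) in
  row_free V0 ->
  (n + N + 1 <= T)%N ->
  0 < lam <= 1 ->
  forall (GK : 'M[R]_(T, n + N)) (Ps : 'M[R]_s) (ldw : 'cV[R]_s),
  (forall i : 'I_s,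
     is_min [set r | exists G2 : 'M[R]_(T, N),
                       is_max (worst_vals F g hw X1 (lsubmx GK) G2 Q i) r] (ldw i ord0)) ->
  (forall i : 'I_s, is_max (worst_vals F g hw X1 (lsubmx GK) (rsubmx GK) Q i) (ldw i ord0)) ->
  mxle (Ps *m g) (lam *: g - ldw) ->
  Ps *m F = F *m X1 *m lsubmx GK ->
  V0 *m GK = 1%:M ->
  mxle 0 Ps ->
  let K1 := U0 *m lsubmx GK in
  let K2 := U0 *m rsubmx GK in
  let f := fun x w => A *m col_mx x (S x) + B *m (K1 *m x + K2 *m Q x) + w in
  lam_contractive f F g lam hw /\ robust_invariant f F g hw.
Proof.
move=> _ _ _ _ _ HC Hdyn Hw Q U0 X0 X1 V0 _ _ /andP[lam0 lam1] GK Ps ldw _ Hmax HPg HPF HV HPs K1 K2 f.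
set G1 := lsubmx GK; set G2 := rsubmx GK.
set W0 := datamx T wd; set S0 := datamx T (fun t => S (xd t)).
set Q0 := datamx T (fun t => Q (xd t)).
set A1 := lsubmx A; set A2 := rsubmx A.
have HA : A = row_mx A1 A2 by rewrite hsubmxK.
have Hdata : X1 = A *m col_mx X0 S0 + B *m U0 + W0.
  apply: mx_colP => j; rewrite !colE !mulmxDl -!mulmxA -!colE !datamx_col.
  by rewrite col_col_mx !datamx_col Hdyn.
have HS0 : S0 = Q0 + As *m X0.
  apply: mx_colP => j; rewrite !colE !mulmxDl -!mulmxA -!colE !datamx_col.
  by rewrite /Q subrK.
have HV' : col_mx X0 Q0 *m row_mx G1 G2 = 1%:M by rewrite hsubmxK.
rewrite mul_col_mx !mul_mx_row scalar_mx_block in HV'.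
have [HX0G1 HX0G2 HQ0G1 HQ0G2] := eq_block_mx HV'.
have E1 : X1 *m G1 = A1 + A2 *m As + B *m U0 *m G1 + W0 *m G1.
  rewrite Hdata HA mul_row_col HS0 !(mulmxDl, mulmxDr) -!mulmxA HX0G1 HQ0G1.
  by rewrite mulmx0 add0r !mulmx1.
have E2 : X1 *m G2 = A2 + B *m U0 *m G2 + W0 *m G2.
  rewrite Hdata HA mul_row_col HS0 !(mulmxDl, mulmxDr) -!mulmxA HX0G2 HQ0G2.
  by rewrite !mulmx0 addr0 add0r !mulmx1.
have Hf : forall x w, f x w = X1 *m G1 *m x + delta_term X1 G1 G2 Q x W0 w.
  move=> x w; rewrite /f /delta_term E1 E2 HA mul_row_col.
  have -> : S x = Q x + As *m x by rewrite /Q subrK.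
  rewrite !(mulmxDl, mulmxDr, mulmxBr) !mulmxA.
  exact: zmod_id.
have hw0 : 0 <= hw := le_trans (vnorm_ge0 (wd 0%N)) (Hw 0%N).
have HW0 : mnorm W0 <= T%:R * hw.
  rewrite /mnorm; elim/big_ind: _ => //.
  - by rewrite mulr_ge0.
  - by move=> x y hx hy; rewrite ge_max hx.
  move=> i _; apply: le_trans (_ : \sum_(j < T) hw <= _).
    apply: ler_sum => j _; rewrite mxE; exact: le_trans (vnorm_ge _ i) (Hw j).
  by rewrite sumr_const card_ord mulr_natl.
have Hg0 : mxle 0 g.
  have /nbhs_singleton H0 := HC.2.
  by move=> i j; move: (H0 i j); rewrite mulmx0.
have Hc : lam_contractive f F g lam hw.
  move=> x w Hx Hwn i j; rewrite (ord1 j) Hf mulmxDr !mulmxA -HPF -mulmxA.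
  rewrite mxE.
  have h1 : (Ps *m (F *m x)) i 0 <= (Ps *m g) i 0.
    rewrite !mxE; apply: ler_sum => k _; apply: ler_wpM2l.
      by have := HPs i k; rewrite mxE.
    exact: Hx.
  have h2 : (F *m delta_term X1 G1 G2 Q x W0 w) i 0 <= ldw i 0.
    have := (Hmax i).2 ((row i F *m delta_term X1 G1 G2 Q x W0 w) 0 0).
    rewrite -row_mul mxE; apply; rewrite /worst_vals /=.
    exists x, W0, w; do 3 split => //.
    rewrite !mxE; apply: eq_bigr => k _; congr (_ * _); by rewrite mxE.
  apply: le_trans (lerD h1 h2) _.
  by move: (HPg i 0); rewrite !mxE lerBrDr.
split => //.
move=> xs ws H0 Hws Hxs; elim=> // t IH.
rewrite Hxs => i j; apply: le_trans (Hc _ _ IH (Hws t) i j) _.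
rewrite mxE; have := Hg0 i j; rewrite mxE => gij.
by rewrite ler_piMl.
Qed.
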